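(* Fix $i\in\mathcal V$. Let $\mathbf u\in\mathcal A(b):=\{\mathbf w\in\mathbb R^{d+2}:0<\rho(\mathbf w)<b^{-1}\}$ and $\mathbf p\in\mathbb R^{d+2}$, and let $\ell_0>0$ be such that $\mathbf u+\ell_0\mathbf p\in\mathcal A(b)$. Define $f:[0,\ell_0]\to\mathbb R$ by $f(\ell)=\Phi_i^s(\mathbf u+\ell\mathbf p)$, where $$\Phi_i^s(\mathbf w)=\rho(\mathbf w)E(\mathbf w)-\tfrac12\|\mathbf m(\mathbf w)\|^2-S_i^{\min,n}\rho(\mathbf w)^{\gamma_i^{\min,n}+1}(1-b\rho(\mathbf w))^{1-\gamma_i^{\min,n}}.$$ Then the sign of $f'''(\ell)$ is constant over $[0,\ell_0]$ (i.e. $f''$ is monotone on $[0,\ell_0]$).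
   Context: Let $d\ge1$, $b\ge0$ (when $b=0$, read $b^{-1}=+\infty$). For $\mathbf w\in\mathbb R^{d+2}$, $\rho(\mathbf w)$ is its first component, $\mathbf m(\mathbf w)\in\mathbb R^d$ its components $2$ to $d+1$, $E(\mathbf w)$ its last component; for $\rho>0$, $e(\mathbf w)=E/\rho-\tfrac12\|\mathbf m/\rho\|^2$. Admissible set $\mathcal B(b)=\{\rho>0,\ 1-b\rho>0,\ e>0\}$. A pressure oracle $p:\mathcal B(b)\to[0,\infty)$ is given, with flux $\mathbb f(\mathbf w)=(\mathbf m,\ \frac{\mathbf m}{\rho}\otimes\mathbf m+p\,\mathbb I_d,\ \frac{\mathbf m}{\rho}(E+p))^{\mathsf T}$. Discretization: finite index set $\mathcal V$, stencils $\mathcal I(i)\ni i$, masses $m_i>0$, vectors $\mathbf c_{ij}\in\mathbb R^d$ ($\mathbf c_{ij}=-\mathbf c_{ji}$, $\sum_j\mathbf c_{ij}=0$, nonzero for $j\ne i$), $\mathbf n_{ij}=\mathbf c_{ij}/\|\mathbf c_{ij}\|$, states $\mathsf U_k^n=(\varrho_k^n,\mathsf M_k^n,\mathsf E_k^n)\in\mathcal B(b)$ for all $k$. $\gamma_k^n=1+\frac{p(\mathsf U_k^n)(1-b\varrho_k^n)}{\varrho_k^n e(\mathsf U_k^n)}$ and $\gamma_i^{\min,n}=\min_{j\in\mathcal I(i)}\gamma_j^n$ (so $\gamma_i^{\min,n}\ge1$). For $j\ne i$, $d_{ij}^{\mathrm L,n}=\max(\widehat\lambda(\mathbf n_{ij},\mathsf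 U_i^n,\mathsf U_j^n)\|\mathbf c_{ij}\|,\widehat\lambda(\mathbf n_{ji},\mathsf U_j^n,\mathsf U_i^n)\|\mathbf c_{ji}\|)$, where $\widehat\lambda$ is a positive upper bound on the maximum wave speed of the associated one-dimensional extended Riemann problem (any positive numbers are admissible for the present statement), and $\overline{\mathsf U}_{ij}^n=\tfrac12(\mathsf U_i^n+\mathsf U_j^n)-\frac{1}{2d_{ij}^{\mathrm L,n}}(\mathbb f(\mathsf U_j^n)-\mathbb f(\mathsf U_i^n))\mathbf c_{ij}$. With $S(\mathbf w,\gamma)=\frac{\rho e(\mathbf w)}{\rho^\gamma}(1-b\rho)^{\gamma-1}$, set $S_i^{\min,n}=\min\big(\min_{j\in\mathcal I(i)}S(\mathsf U_j^n,\gamma_i^{\min,n}),\min_{j\in\mathcal I(i)\setminus\{i\}}S(\overline{\mathsf U}_{ij}^n,\gamma_i^{\min,n})\big)$, which is a nonnegative constant in the setting of the paper (the auxiliary states lie in $\mathcal B(b)$). $\Phi_i^s(\mathbf w)=\rho(\mathbf w)\Psi_i^s(\mathbf w)$ where $\Psi_i^s(\mathbf w)=\rho e(\mathbf w)-S_i^{\min,n}\rho^{\gamma_i^{\min,n}}(1-b\rho)^{1-\gamma_i^{\min,n}}$. *)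

(* Defs.v *)
From HB Require Import structures.
From mathcomp Require Import all_boot all_order all_algebra.
From mathcomp Require Import all_classical all_reals all_analysis.
Set Implicit Arguments. Unset Strict Implicit. Unset Printing Implicit Defensive.
Import Order.TTheory GRing.Theory Num.Theory.
Import numFieldNormedType.Exports.
Local Open Scope ring_scope.

Section Euler.
Variable R : realType.
(* the paper's space dimension is d.+1 (so it is >= 1); states live in
   R^{(d.+1)+2} = 'rV_(d.+3) *)
Variable d : nat.

Definition rho (w : 'rV[R]_(d.+3)) : R := w 0 ord0.
Definition mom (w : 'rV[R]_(d.+3)) (k : 'I_(d.+1)) : R := w 0 (inord k.+1).
Definition Eng (w : 'rV[R]_(d.+3)) : R := w 0 ord_max.
Definition msq (w : 'rV[R]_(d.+3)) : R := \sum_(k < d.+1) mom w k ^+ 2.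

Definition eint (w : 'rV[R]_(d.+3)) : R :=
  Eng w / rho w - 2^-1 * \sum_(k < d.+1) (mom w k / rho w) ^+ 2.

(* admissible set B(b); the condition 1 - b rho > 0 reads b^{-1}=+oo when b=0 *)
Definition inB (b : R) (w : 'rV[R]_(d.+3)) : Prop :=
  0 < rho w /\ 0 < 1 - b * rho w /\ 0 < eint w.

(* A(b) = { 0 < rho < b^{-1} } (with b^{-1} = +oo when b = 0) *)
Definition inA (b : R) (w : 'rV[R]_(d.+3)) : Prop :=
  0 < rho w /\ 0 < 1 - b * rho w.

Definition vnorm (c : 'rV[R]_(d.+1)) : R := Num.sqrt (\sum_(k < d.+1) c 0 k ^+ 2).
Definition vdot (x y : 'rV[R]_(d.+1)) : R := \sum_(k < d.+1) x 0 k * y 0 k.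

(* the flux f(w) applied to the vector c, i.e. f(w) c in R^{d+2}, with
   f(w) = (m, m/rho (x) m + p I_d, m/rho (E+p))^T *)
Definition flux_c (p : 'rV[R]_(d.+3) -> R) (w : 'rV[R]_(d.+3)) (c : 'rV[R]_(d.+1))
  : 'rV[R]_(d.+3) :=
  let mc := \sum_(k < d.+1) mom w k * c 0 k in
  \row_(l < d.+3)
    if (l : nat) == 0%N then mc
    else if (l : nat) == d.+2 then mc / rho w * (Eng w + p w)
    else mom w (inord l.-1) / rho w * mc + p w * c 0 (inord l.-1).

Definition Sfun (b : R) (w : 'rV[R]_(d.+3)) (g : R) : R :=
  rho w * eint w / powR (rho w) g * powR (1 - b * rho w) (g - 1).

Section Discretization.
Variable V : finType.
Variables (b : R) (p : 'rV[R]_(d.+3) -> R) (I : V -> {set V})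
  (c : V -> V -> 'rV[R]_(d.+1)) (U : V -> 'rV[R]_(d.+3))
  (lam : 'rV[R]_(d.+1) -> 'rV[R]_(d.+3) -> 'rV[R]_(d.+3) -> R).

Definition gammak (k : V) : R :=
  1 + p (U k) * (1 - b * rho (U k)) / (rho (U k) * eint (U k)).

Definition gamma_min (i : V) : R :=
  \big[Num.min/gammak i]_(j in I i) gammak j.

Definition nvec (i j : V) : 'rV[R]_(d.+1) := (vnorm (c i j))^-1 *: c i j.

Definition dL (i j : V) : R :=
  Num.max (lam (nvec i j) (U i) (U j) * vnorm (c i j))
          (lam (nvec j i) (U j) (U i) * vnorm (c j i)).

Definition Ubar (i j : V) : 'rV[R]_(d.+3) :=
  2^-1 *: (U i + U j) - (2 * dL i j)^-1 *: (flux_c p (U j) (c i j) - flux_c p (U i) (c i j)).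

(* S_i^{min,n}; the default value S(U_i, gamma) used for the second minimum
   (over I(i)\{i}) does not change the overall minimum since i \in I(i). *)
Definition S_min (i : V) : R :=
  let g := gamma_min i in
  Num.min (\big[Num.min/Sfun b (U i) g]_(j in I i) Sfun b (U j) g)
          (\big[Num.min/Sfun b (U i) g]_(j in I i | j != i) Sfun b (Ubar i j) g).

Definition Phi_s (i : V) (w : 'rV[R]_(d.+3)) : R :=
  rho w * Eng w - 2^-1 * msq w
  - S_min i * powR (rho w) (gamma_min i + 1) * powR (1 - b * rho w) (1 - gamma_min i).

End Discretization.
End Euler.

(* Main.v *)
Require Import Defs.
From HB Require Import structures.
From mathcomp Require Import all_boot all_order all_algebra.
From mathcomp Require Import all_classical all_reals all_analysis.
From mathcomp Require Import ring lra.
Import Order.TTheory GRing.Theory Num.Theory.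
Import numFieldNormedType.Exports.
Local Open Scope ring_scope.

Section Poly.
Variable R : realType.
Definition Pf (A B C : R) (y : R) : R := A + B * y + C * (y * y).

Lemma Pf_derive A B C (x : R) : is_derive x 1 (Pf A B C) (Pf B (2 * C) 0 x).
Proof.
have -> : Pf A B C = cst A + B *: id + C *: (id * id) by [].
apply: is_derive_eq.
rewrite /Pf /GRing.scale /=. ring.
Qed.

Lemma lin_derive (F G : R -> R) dF dG (al be x : R) :
  is_derive x 1 F dF -> is_derive x 1 G dG ->
  is_derive x 1 (fun y => al * F y - be * G y) (al * dF - be * dG).
Proof.
move=> hF hG.
have -> : (fun y => al * F y - be * G y) = al *: F - be *: G by [].
apply: is_derive_eq.
rewrite /GRing.scale /=. ring.
Qed.
End Poly.
Arguments Pf {R}.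
Arguments lin_derive {R}.
Arguments Pf_derive {R}.

Section Aux.
Variable R : realType.
Variables r0 r1 b : R.
Definition rl (x : R) := r0 + x * r1.
Definition tl (x : R) := 1 - b * rl x.
Definition Dom x := 0 < rl x /\ 0 < tl x.
Definition K (a c : R) (x : R) := powR (rl x) a * powR (tl x) c.
Definition HD (F dF : R -> R) := forall x, Dom x -> is_derive x 1 F (dF x).

Lemma rl_derive (x : R) : is_derive x 1 rl r1.
Proof.
rewrite /rl.
have -> : (fun y : R => r0 + y * r1) = cst r0 + (fun y => y * r1) by [].
apply: is_derive_eq.
by rewrite scaler0 !add0r /GRing.scale /= mulr1.
Qed.

Lemma tl_derive (x : R) : is_derive x 1 tl (- (b * r1)).
Proof.
have -> : tl = cst 1 - b *: rl by [].
have hr := rl_derive x.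
apply: is_derive_eq.
rewrite /GRing.scale /=. ring.
Qed.

Lemma Dom_near x : Dom x -> \forall y \near x, Dom y.
Proof.
move=> [h1 h2].
have e1 : derivable rl x 1 by apply: ex_derive; exact: rl_derive.
have e2 : derivable tl x 1 by apply: ex_derive; exact: tl_derive.
have c1 := differentiable_continuous (proj1 (derivable1_diffP _ _) e1).
have c2 := differentiable_continuous (proj1 (derivable1_diffP _ _) e2).
have H1 := cvgr_gt _ c1 _ h1.
have H2 := cvgr_gt _ c2 _ h2.
near=> y; split.
  near: y. exact: H1.
near: y. exact: H2.
Unshelve. all: by end_near.
Qed.

Definition dK a c x := a * r1 * K (a - 1) c x - c * (b * r1) * K a (c - 1) x.
Definition ddK a c x := a * r1 * dK (a - 1) c x - c * (b * r1) * dK a (c - 1) x.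
Definition dddK a c x := a * r1 * ddK (a - 1) c x - c * (b * r1) * ddK a (c - 1) x.

Lemma K_derive a c x : Dom x -> is_derive x 1 (K a c) (dK a c x).
Proof.
move=> [hr ht].
have -> : K a c = (((@powR R)^~ a) \o rl) * (((@powR R)^~ c) \o tl) by [].
have d1 := is_derive1_comp (is_derive1_powR a hr) (rl_derive x).
have d2 := is_derive1_comp (is_derive1_powR c ht) (tl_derive x).
apply: is_derive_eq.
rewrite /dK /K /GRing.scale /=. ring.
Qed.

Lemma HD_K a c : HD (K a c) (dK a c).
Proof. by move=> x dx; apply: K_derive. Qed.

Lemma HD_dK a c : HD (dK a c) (ddK a c).
Proof.
move=> x dx; have h := lin_derive _ _ _ _ (a * r1) (c * (b * r1)) _ (K_derive (a-1) c x dx) (K_derive a (c-1) x dx); exact h.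
Qed.

Lemma HD_ddK a c : HD (ddK a c) (dddK a c).
Proof.
move=> x dx; have h := lin_derive _ _ _ _ (a * r1) (c * (b * r1)) _ (HD_dK (a-1) c x dx) (HD_dK a (c-1) x dx); exact h.
Qed.

Lemma HD_derive1 F F1 F2 : HD F F1 -> HD F1 F2 -> HD (derive1 F) F2.
Proof.
move=> h1 h2 x dx; apply: (near_eq_is_derive _ (h2 x dx)).
have := Dom_near x dx; apply: filterS => y dy.
have := h1 y dy; by rewrite derive1E => -[_ ->].
Qed.

Lemma Knorm p q p' q' (k j : nat) x : Dom x -> p = p' + k%:R -> q = q' + j%:R ->
  K p q x = K p' q' x * rl x ^+ k * tl x ^+ j.
Proof.
move=> [hr ht] -> ->.
rewrite /K !powRD; last 2 first.
- by apply/implyP => _; rewrite gt_eqF.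
- by apply/implyP => _; rewrite gt_eqF.
rewrite !powR_mulrn ?ltW //. ring.
Qed.

Lemma dddK_val g x : Dom x ->
  dddK (g + 1) (1 - g) x = r1 ^+ 3 * ((g + 1) * g * (g - 1)) * K (g - 2) (- g - 2) x.
Proof.
move=> dx.
rewrite /dddK /ddK /dK.
rewrite !(@Knorm (g + 1 - 1 - 1 - 1) (1 - g) (g - 2) (- g - 2) 0 3 x dx); [| ring | ring].
rewrite !(@Knorm (g + 1 - 1 - 1) (1 - g - 1) (g - 2) (- g - 2) 1 2 x dx); [| ring | ring].
rewrite !(@Knorm (g + 1 - 1) (1 - g - 1 - 1) (g - 2) (- g - 2) 2 1 x dx); [| ring | ring].
rewrite !(@Knorm (g + 1) (1 - g - 1 - 1 - 1) (g - 2) (- g - 2) 3 0 x dx); [| ring | ring].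
rewrite /tl. ring.
Qed.
End Aux.
Arguments rl {R}.
Arguments tl {R}.
Arguments Dom {R}.
Arguments K {R}.
Arguments HD {R}.
Arguments dK {R}.
Arguments ddK {R}.
Arguments dddK {R}.
Arguments HD_K {R}.
Arguments HD_dK {R}.
Arguments HD_ddK {R}.
Arguments HD_derive1 {R}.
Arguments dddK_val {R}.
Arguments Dom_near {R}.
Arguments K_derive {R}.

Lemma pos_seg (R : realType) (x0 y l l0 : R) : 0 < l0 -> 0 < x0 -> 0 < x0 + l0 * y ->
  0 <= l <= l0 -> 0 < x0 + l * y.
Proof.
move=> hl0 h0 h1 /andP[ha hb].
have [hy|hy] := lerP 0 y; first by nra.
nra.
Qed.

Theorem lemma4p6 (R : realType) (d : nat) (V : finType) (b : R)
  (p : 'rV[R]_(d.+3) -> R) (I : V -> {set V}) (mass : V -> R)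
  (c : V -> V -> 'rV[R]_(d.+1)) (U : V -> 'rV[R]_(d.+3))
  (lam : 'rV[R]_(d.+1) -> 'rV[R]_(d.+3) -> 'rV[R]_(d.+3) -> R)
  (hb : 0 <= b)
  (hp : forall w, inB b w -> 0 <= p w)
  (hI : forall k, k \in I k)
  (hmass : forall k, 0 < mass k)
  (hc_anti : forall k l, c k l = - c l k)
  (hc_sum : forall k, \sum_(l in I k) c k l = 0)
  (hc_nz : forall k l, l \in I k -> l != k -> c k l != 0)
  (hU : forall k, inB b (U k))
  (hlam : forall n u v, 0 < lam n u v)
  (i : V)
  (hUbar : forall j, j \in I i -> j != i -> inB b (Ubar p c U lam i j))
  (u q : 'rV[R]_(d.+3)) (l0 : R) :
  inA b u -> 0 < l0 -> inA b (u + l0 *: q) ->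
  let f := fun l : R => Phi_s b p I c U lam i (u + l *: q) in
  (forall l, 0 <= l <= l0 ->
     derivable f l 1 /\ derivable (derive1 f) l 1 /\ derivable (derive1n 2 f) l 1) /\
  ((forall l, 0 <= l <= l0 -> 0 <= derive1n 3 f l) \/
   (forall l, 0 <= l <= l0 -> derive1n 3 f l <= 0)).

Proof.
move=> hu hl0 hul0 f.
set g := gamma_min b p I U i.
set S := S_min b p I c U lam i.
have gk1 : forall k, 1 <= gammak b p U k.
  move=> k; case: (hU k) => hr [ht he]; rewrite /gammak lerDl.
  apply: divr_ge0; first exact: mulr_ge0 (hp _ (hU k)) (ltW ht).
  exact: ltW (mulr_gt0 hr he).
have hg : 1 <= g.
  rewrite /g /gamma_min; apply: (big_ind (fun x => 1 <= x)) => //.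
  by move=> x y hx hy; rewrite le_min hx hy.
have Sfun_ge0 : forall (w : 'rV[R]_(d.+3)) (gg : R), inB b w -> 0 <= Sfun b w gg.
  move=> w gg; rewrite /inB => -[hr [ht he]]; rewrite /Sfun; apply: mulr_ge0; last exact: powR_ge0.
  apply: divr_ge0; last exact: powR_ge0.
  exact: ltW (mulr_gt0 hr he).
have hS : 0 <= S.
  rewrite /S /S_min le_min; apply/andP; split.
    apply: (big_ind (fun x => 0 <= x)).
    - exact: Sfun_ge0.
    - by move=> x y hx hy; rewrite le_min hx hy.
    - by move=> j _; apply: Sfun_ge0.
  apply: (big_ind (fun x => 0 <= x)).
  - exact: Sfun_ge0.
  - by move=> x y hx hy; rewrite le_min hx hy.
  - by move=> j /andP[h1 h2]; apply: Sfun_ge0; apply: hUbar.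
set r0 := rho u. set r1 := rho q. set e0 := Eng u. set e1 := Eng q.
set Mu := \sum_(k < d.+1) mom u k ^+ 2.
set Muq := \sum_(k < d.+1) mom u k * mom q k.
set Mq := \sum_(k < d.+1) mom q k ^+ 2.
set A := r0 * e0 - 2^-1 * Mu.
set B := r0 * e1 + r1 * e0 - 2^-1 * (2 * Muq).
set C0 := r1 * e1 - 2^-1 * Mq.
have ef : f = fun y => 1 * Pf A B C0 y - S * K r0 r1 b (g + 1) (1 - g) y.
  apply: funext => l.
  rewrite /f /Phi_s -/g -/S.
  have hr : rho (u + l *: q) = r0 + l * r1 by rewrite /rho !mxE.
  have hE : Eng (u + l *: q) = e0 + l * e1 by rewrite /Eng !mxE.
  have hm : msq (u + l *: q) = Mu + l * (2 * Muq) + l * l * Mq.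
    rewrite /msq /Mu /Muq /Mq !mulr_sumr -!big_split /=; apply: eq_bigr => k _.
    rewrite /mom !mxE; ring.
  rewrite hr hE hm /K /tl /rl /Pf /A /B /C0; ring.
set a := g + 1. set cc := 1 - g.
have h0 : HD r0 r1 b f (fun y => 1 * Pf B (2 * C0) 0 y - S * dK r0 r1 b a cc y).
  move=> x dx; rewrite ef.
  exact: (lin_derive _ _ _ _ 1 S x (Pf_derive A B C0 x) (HD_K r0 r1 b a cc x dx)).
have h1 : HD r0 r1 b (fun y => 1 * Pf B (2 * C0) 0 y - S * dK r0 r1 b a cc y)
    (fun y => 1 * Pf (2 * C0) (2 * 0) 0 y - S * ddK r0 r1 b a cc y).
  move=> x dx.
  exact: (lin_derive _ _ _ _ 1 S x (Pf_derive B (2 * C0) 0 x) (HD_dK r0 r1 b a cc x dx)).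
have h2 : HD r0 r1 b (fun y => 1 * Pf (2 * C0) (2 * 0) 0 y - S * ddK r0 r1 b a cc y)
    (fun y => 1 * Pf (2 * 0) (2 * 0) 0 y - S * dddK r0 r1 b a cc y).
  move=> x dx.
  exact: (lin_derive _ _ _ _ 1 S x (Pf_derive (2 * C0) (2 * 0) 0 x) (HD_ddK r0 r1 b a cc x dx)).
have hd1 := HD_derive1 r0 r1 b _ _ _ h0 h1.
have hd2 := HD_derive1 r0 r1 b _ _ _ hd1 h2.
have hdom : forall l, 0 <= l <= l0 -> Dom r0 r1 b l.
  move=> l hl; case: hu => hu1 hu2; case: hul0.
  rewrite /rho !mxE -/(rho u) -/(rho q) -/r0 -/r1 => hv1 hv2.
  split; first exact: (@pos_seg R _ _ _ _ hl0 hu1 hv1 hl).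
  rewrite /tl /rl.
  have -> : 1 - b * (r0 + l * r1) = (1 - b * r0) + l * (- (b * r1)) by ring.
  apply: (@pos_seg R _ _ _ _ hl0 hu2 _ hl).
  by have -> : 1 - b * r0 + l0 * - (b * r1) = 1 - b * (r0 + l0 * r1) by ring.
split.
  move=> l hl; have dl := hdom l hl; split; last split.
  - by apply: ex_derive; exact: (h0 l dl).
  - by apply: ex_derive; exact: (hd1 l dl).
  - by apply: ex_derive; exact: (hd2 l dl).
have f3E : forall l, 0 <= l <= l0 -> derive1n 3 f l =
    - (r1 ^+ 3 * (S * ((g + 1) * g * (g - 1)) * K r0 r1 b (g - 2) (- g - 2) l)).
  move=> l hl; have dl := hdom l hl.
  have := hd2 l dl; case=> _ hv.
  rewrite /derive1n /= derive1E hv /a /cc dddK_val // /Pf; ring.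
have hM : forall l, 0 <= l <= l0 ->
    0 <= S * ((g + 1) * g * (g - 1)) * K r0 r1 b (g - 2) (- g - 2) l.
  move=> l hl; have [dr dt] := hdom l hl.
  apply: mulr_ge0; last by apply: mulr_ge0; apply: powR_ge0.
  apply: mulr_ge0 => //; apply: mulr_ge0; last by rewrite subr_ge0.
  apply: mulr_ge0; last by apply: le_trans hg.
  by apply: addr_ge0 => //; apply: le_trans hg.
have [hr1|hr1] := lerP 0 r1.
  right => l hl; rewrite f3E //.
  rewrite oppr_le0; apply: mulr_ge0; [exact: exprn_ge0 | exact: hM].
left => l hl; rewrite f3E //.
have -> : - (r1 ^+ 3 * (S * ((g + 1) * g * (g - 1)) * K r0 r1 b (g - 2) (- g - 2) l))
  = (- r1) ^+ 3 * (S * ((g + 1) * g * (g - 1)) * K r0 r1 b (g - 2) (- g - 2) l) by ring.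
apply: mulr_ge0; last exact: hM.
by apply: exprn_ge0; rewrite oppr_ge0 ltW.
Qed.
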